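(* Let $X$ be a real Banach space and $h:X\times X^*\to\mathbb{R}\cup\{\pm\infty\}$ a convex function with $h(x,x^* )\geq\langle x,x^*\rangle$ for all $(x,x^* )\in X\times X^*$. Then $$P_2(D(h))\subseteq\mathrm{cl}_{w*}P_1(D(h^* )),\qquad P_1(D(h))\subseteq\mathrm{cl}_{w*}P_2(D(h^* )),$$ where the first closure is the weak-$*$ closure in $X^*$ and the second is the weak-$*$ closure in $X^{**}$.
   Context: $X$ is identified with its canonical image in $X^{**}$. $P_1,P_2$ are the canonical projections of a Cartesian product onto its factors; $D(f)=\{z\;|\;f(z)<\infty\}$. The conjugate of $h$ is $h^*:X^*\times X^{**}\to\mathbb{R}\cup\{\pm\infty\}$, $h^*(x^*,x^{**})=\sup_{(y,y^* )\in X\times X^*}\langle y,x^*\rangle+\langle x^{**},y^*\rangle-h(y,y^* )$. *)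

(* Defs.v *)
From HB Require Import structures.
From mathcomp Require Import all_boot all_order all_algebra.
From mathcomp Require Import all_classical all_reals all_analysis.
Set Implicit Arguments. Unset Strict Implicit. Unset Printing Implicit Defensive.
Import Order.TTheory GRing.Theory Num.Theory.
Import numFieldNormedType.Exports.
Local Open Scope classical_set_scope.
Local Open Scope ring_scope.

Definition is_lin (R : realType) (X : normedModType R) (f : X -> R) : Prop :=
  forall (a : R) (x y : X), f (a *: x + y) = a * f x + f y.

Record dual (R : realType) (X : normedModType R) := Dual {
  dual_fun :> X -> R;
  dual_lin : is_lin dual_fun;
  dual_cont : continuous dual_fun }.

Definition dual_norm (R : realType) (X : normedModType R) (f : dual X) : R :=
  sup [set `|f x| | x in [set x : X | `|x| <= 1]].

(* The bidual X^** : linear functionals on X^* bounded w.r.t. the dual norm.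
   Since dual X carries no vector structure here, linearity is phrased
   through pointwise linear combinations. *)
Record bidual (R : realType) (X : normedModType R) := Bidual {
  bid_fun :> dual X -> R;
  bid_lin : forall (a : R) (f g h : dual X),
      (forall x, h x = a * f x + g x) -> bid_fun h = a * bid_fun f + bid_fun g;
  bid_bdd : exists C : R, forall f : dual X, `|bid_fun f| <= C * dual_norm f }.

Definition convex_fun (R : realType) (X : normedModType R)
    (h : X * dual X -> \bar R) : Prop :=
  forall (x1 x2 : X) (f1 f2 f : dual X) (t r1 r2 : R),
    0 <= t <= 1 ->
    (forall y, f y = t * f1 y + (1 - t) * f2 y) ->
    (h (x1, f1) <= r1%:E)%E -> (h (x2, f2) <= r2%:E)%E ->
    (h ((t *: x1 + (1 - t) *: x2)%R, f) <= (t * r1 + (1 - t) * r2)%:E)%E.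

Definition fconj (R : realType) (X : normedModType R)
    (h : X * dual X -> \bar R) : dual X * bidual X -> \bar R :=
  fun p => ereal_sup [set z | exists (y : X) (g : dual X),
                        z = ((p.1 y + p.2 g)%:E - h (y, g))%E].

Definition dom (T : Type) (R : realType) (f : T -> \bar R) : set T :=
  [set z | (f z < +oo)%E].

(* Weak-* closure in X^* (topology sigma(X^{*}, X)), via its basic neighbourhoods. *)
Definition wstar_cl (R : realType) (X : normedModType R) (A : set (dual X))
    : set (dual X) :=
  [set f | forall (n : nat) (xs : 'I_n -> X) (e : R), 0 < e ->
     exists2 g, A g & forall i, `|g (xs i) - f (xs i)| < e].

(* Membership of a functional phi on X^* in the weak-* closure (topology
   sigma(X^{**}, X^{*})) of A subset X^{**}; used with phi = canonical image of x in X. *)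
Definition in_wstar_cl_bid (R : realType) (X : normedModType R)
    (A : set (bidual X)) (phi : dual X -> R) : Prop :=
  forall (n : nat) (fs : 'I_n -> dual X) (e : R), 0 < e ->
     exists2 psi, A psi & forall i, `|psi (fs i) - phi (fs i)| < e.

(* Main.v *)
Require Import Defs.
From HB Require Import structures.
From mathcomp Require Import all_boot all_order all_algebra.
From mathcomp Require Import all_classical all_reals all_analysis.
From mathcomp Require Import ring lra.
Import Order.TTheory GRing.Theory Num.Theory.
Import numFieldNormedType.Exports.
Local Open Scope classical_set_scope.
Local Open Scope ring_scope.

Module Aux.
Set Implicit Arguments. Unset Strict Implicit. Unset Printing Implicit Defensive.
Section InfH.
Variable R : realType.
Lemma infH_le (E : set R) (b y : R) : (forall z, E z -> b <= z) -> E y -> inf E <= y.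
Proof. move=> Hb Ey; apply: ge_inf => //; by exists b. Qed.
Lemma infH_ge (E : set R) (x : R) : E !=set0 -> (forall z, E z -> x <= z) -> x <= inf E.
Proof. by move=> ne Hx; apply: lb_le_inf. Qed.
Lemma infH_lt (E : set R) (b e : R) : (forall z, E z -> b <= z) -> E !=set0 -> 0 < e ->
  exists2 z, E z & z < inf E + e.
Proof. move=> Hb ne e0; apply: inf_adherent => //; split => //; by exists b. Qed.
Lemma infH_lb (E : set R) (b : R) : (forall z, E z -> b <= z) -> E !=set0 -> b <= inf E.
Proof. by move=> Hb ne; apply: infH_ge. Qed.
End InfH.

Section HB.
Variables (R : realType) (V : lmodType R).

Definition subl (p : V -> R) :=
  (forall x y, p (x + y) <= p x + p y) /\ (forall c x, 0 < c -> p (c *: x) <= c * p x).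

Lemma subl0 p : subl p -> p 0 = 0.
Proof.
move=> [Ha Hz]; have h2 := Hz 2 0 (ltr0Sn _ 1).
have h1 := Hz 2^-1 0; rewrite !scaler0 in h2 h1.
have := h1 (ltac:(by rewrite invr_gt0 ltr0Sn)).
rewrite (_ : 2^-1 * p 0 = p 0 / 2); last by rewrite mulrC.
lra.
Qed.

Lemma sublZ p c x : subl p -> 0 < c -> p (c *: x) = c * p x.
Proof.
move=> [Ha Hz] c0; apply/eqP; rewrite eq_le Hz //=.
have ci : 0 < c^-1 by rewrite invr_gt0.
have := Hz c^-1 (c *: x) ci; rewrite scalerA mulVf ?gt_eqF // scale1r => h.
by rewrite -(ler_pM2l ci) mulrA mulVf ?gt_eqF // mul1r.
Qed.

Lemma sublN p x : subl p -> 0 <= p x + p (- x).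
Proof. move=> sp; rewrite -(subl0 sp) -(subrr x); exact: sp.1. Qed.


Variable q : V -> R.
Hypothesis sq : subl q.

Definition Tq := {p : V -> R | subl p /\ forall x, p x <= q x}.
Definition Rq (a b : Tq) : bool := `[< forall x, sval b x <= sval a x >].

Lemma Tq_lb (p : Tq) x : - q (- x) <= sval p x.
Proof.
case: p => p [sp pq] /=; have := sublN x sp; have := pq (- x); lra.
Qed.

Lemma Rq_refl t : Rq t t. Proof. by apply/asboolP. Qed.
Lemma Rq_trans r s t : Rq r s -> Rq s t -> Rq r t.
Proof. move=> /asboolP h1 /asboolP h2; apply/asboolP => x; exact: le_trans (h2 x) (h1 x). Qed.

Definition q0 : Tq := exist _ q (conj sq (fun x => lexx _)).

Lemma Rq_chain (A : set Tq) : total_on A Rq -> exists t, forall s, A s -> Rq s t.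
Proof.
move=> tot.
pose A' := A `|` [set q0].
have tot' : total_on A' Rq.
  move=> s t [As|->] [At|->].
  - exact: tot.
  - by right; apply/asboolP => x; case: s {As} => s [] /=.
  - by left; apply/asboolP => x; case: t {At} => t [] /=.
  - by left; exact: Rq_refl.
pose E x := [set sval p x | p in A'].
have Elb x z : E x z -> - q (- x) <= z by move=> [p _ <-]; exact: Tq_lb.
have Ene x : E x !=set0 by exists (q x); exists q0 => //; right.
pose ip x := inf (E x).
have ipq x : ip x <= q x by apply: (infH_le (@Elb x)); exists q0 => //; right.
have ipp p x : A' p -> ip x <= sval p x by move=> Ap; apply: (infH_le (@Elb x)); exists p.
have sip : subl ip.
  split.
  - move=> x y; apply/ler_addgt0Pr => e e0.
    have e2 : 0 < e / 2 by rewrite divr_gt0.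
    have [_ [p1 Ap1 <-] h1] := infH_lt (@Elb x) (Ene x) e2.
    have [_ [p2 Ap2 <-] h2] := infH_lt (@Elb y) (Ene y) e2.
    have key : exists2 p, A' p & sval p (x + y) <= sval p1 x + sval p2 y.
      case: (tot' _ _ Ap1 Ap2) => /asboolP H.
      + exists p2 => //; case: p2 {Ap2 h2} H => p2 [[sa _] _] /= H.
        exact: le_trans (sa x y) (lerD (H x) (lexx _)).
      + exists p1 => //; case: p1 {Ap1 h1} H => p1 [[sa _] _] /= H.
        exact: le_trans (sa x y) (lerD (lexx _) (H y)).
    case: key => p Ap hp; have := ipp p (x + y) Ap.
    have -> : e = e / 2 + e / 2 by rewrite -splitr.
    lra.
  - move=> c x c0.
    have ci : 0 < c^-1 by rewrite invr_gt0.
    rewrite -(ler_pM2l ci) mulrA mulVf ?gt_eqF // mul1r.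
    apply: infH_ge (Ene x) _ => _ [p Ap <-].
    rewrite ler_pdivrMl //; apply: le_trans (ipp p _ Ap) _.
    by case: p {Ap} => p [[_ sb] _] /=; apply: sb.
  have sipq : subl ip /\ forall x, ip x <= q x by split.
  exists (exist _ ip sipq) => s As; apply/asboolP => x /=; apply: ipp; by left.
Qed.

Lemma premax_neg (p : Tq) : premaximal Rq p -> forall v, sval p (- v) <= - sval p v.
Proof.
move=> pm v; case Hp: p pm => [f [sf fq]] pm /=.
pose E x := [set f (x + t *: v) - t * f v | t in [set t : R | 0 <= t]].
have Elb x z : E x z -> - f (- x) <= z.
  move=> [t /= t0 <-].
  have h1 : f (t *: v) <= f (x + t *: v) + f (- x).
    by rewrite -{1}(addKr x (t *: v)) addrC; apply: sf.1.
  have h2 : t * f v <= f (t *: v).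
    case: (ltrgt0P t) t0 => // [tp|->] _; first by rewrite sublZ.
    rewrite mul0r (_ : 0 *: v = 0) ?subl0 //; exact: scale0r.
  lra.
have Ene x : E x !=set0.
  by exists (f (x + 0 *: v) - 0 * f v); exists 0; rewrite /mkset.
pose g x := inf (E x).
have gf x : g x <= f x.
  apply: (infH_le (@Elb x)); exists 0; [by rewrite /mkset | by rewrite scale0r addr0 mul0r subr0].
have sg : subl g.
  split.
  - move=> x y; apply/ler_addgt0Pr => e e0.
    have e2 : 0 < e / 2 by rewrite divr_gt0.
    have [_ [t1 /= t10 <-] h1] := infH_lt (@Elb x) (Ene x) e2.
    have [_ [t2 /= t20 <-] h2] := infH_lt (@Elb y) (Ene y) e2.
    have : g (x + y) <= f (x + y + (t1 + t2) *: v) - (t1 + t2) * f v.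
      apply: (infH_le (@Elb (x + y))); exists (t1 + t2) => //=; exact: addr_ge0.
    have : f (x + y + (t1 + t2) *: v) <= f (x + t1 *: v) + f (y + t2 *: v).
      rewrite (_ : x + y + (t1 + t2) *: v = (x + t1 *: v) + (y + t2 *: v)); first exact: sf.1.
      by rewrite scalerDl addrACA.
    have -> : e = e / 2 + e / 2 by rewrite -splitr.
    rewrite mulrDl; lra.
  - move=> c x c0.
    have ci : 0 < c^-1 by rewrite invr_gt0.
    rewrite -(ler_pM2l ci) mulrA mulVf ?gt_eqF // mul1r.
    apply: infH_ge (Ene x) _ => _ [t /= t0 <-].
    rewrite ler_pdivrMl //.
    have : g (c *: x) <= f (c *: x + (c * t) *: v) - (c * t) * f v.
      apply: (infH_le (@Elb _)); exists (c * t) => //=; apply: mulr_ge0 => //; exact: ltW.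
    by rewrite -scalerA -scalerDr (sublZ _ sf c0) mulrBr mulrA.
have sgq : subl g /\ forall x, g x <= q x by split => // x; exact: le_trans (gf x) (fq x).
have := pm (exist _ g sgq); rewrite -Hp.
have Rpg : Rq p (exist _ g sgq) by rewrite Hp; apply/asboolP => x /=.
move=> /(_ Rpg) /asboolP /(_ (- v)) /= H.
rewrite Hp /= in H; apply: le_trans H _; apply: (infH_le (@Elb _)); exists 1; first by rewrite /mkset ler01.
by rewrite scale1r addNr subl0 // mul1r sub0r.
Qed.

Theorem hahn_banach : exists l : V -> R,
  (forall a x y, l (a *: x + y) = a * l x + l y) /\ forall x, l x <= q x.
Proof.
have [p pm] := ZL_preorder q0 Rq_refl Rq_trans Rq_chain.
have hn := premax_neg pm.
case: p pm hn => f [sf fq] _ /= hn.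
have fN v : f (- v) = - f v.
  apply/eqP; rewrite eq_le hn /=; have := sublN v sf; lra.
have fD x y : f (x + y) = f x + f y.
  apply/eqP; rewrite eq_le sf.1 /=.
  have := sf.1 (- x) (- y); rewrite -opprD !fN; lra.
have fZ a x : f (a *: x) = a * f x.
  case: (ltrgt0P a) => [ap|an|->].
  - by rewrite sublZ.
  - rewrite -[a]opprK scaleNr fN sublZ ?oppr_gt0 //; lra.
  - by rewrite scale0r mul0r subl0.
exists f; split => // a x y; by rewrite fD fZ.
Qed.

End HB.

Section Core.
Variables (R : realType) (V : lmodType R).
Variables (N : V -> R) (S : V -> R -> Prop) (b s0 : R).
Hypothesis sN : subl N.
Hypothesis NN : forall x, N (- x) = N x.
Hypothesis Sconv : forall w1 s1 w2 s2 t, 0 <= t <= 1 -> S w1 s1 -> S w2 s2 ->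
  S (t *: w1 + (1 - t) *: w2) (t * s1 + (1 - t) * s2).
Hypothesis S0 : S 0 s0.
Hypothesis Slb : forall w s, S w s -> - N w - b <= s.

Definition Eq (w : V) := [set z : R | exists t w1 s w2,
  [/\ 0 < t, S w1 s, w = t *: w1 + w2 & z = t * (s + b) + N w2]].

Lemma Eq_lb w z : Eq w z -> - N w <= z.
Proof.
move=> [t [w1 [s [w2 [t0 Sw1 -> ->]]]]].
have h1 := Slb Sw1; have h2 := sublZ w1 sN t0.
have h3 := sN.1 (t *: w1 + w2) (- w2); rewrite -addrA subrr addr0 NN in h3.
have h4 : t * (- N w1 - b) <= t * s by rewrite ler_pM2l.
rewrite mulrBr mulrN in h4.
rewrite mulrDr; lra.
Qed.

Lemma Eq_ne w : Eq w !=set0.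
Proof. exists (1 * (s0 + b) + N w); exists 1, 0, s0, w; split => //; by rewrite scaler0 add0r. Qed.

Definition qf w := inf (Eq w).

Lemma qf_le w z : Eq w z -> qf w <= z.
Proof. exact: infH_le (@Eq_lb w). Qed.

Lemma s0b : 0 <= s0 + b.
Proof. have := Slb S0; rewrite (subl0 sN); lra. Qed.

Lemma qf_N w : qf w <= N w.
Proof.
apply/ler_addgt0Pr => e e0.
pose t := e / (s0 + b + 1).
have hp : 0 < s0 + b + 1 by have := s0b; lra.
have t0 : 0 < t by rewrite divr_gt0.
apply: le_trans (qf_le (z := t * (s0 + b) + N w) _) _.
  by exists t, 0, s0, w; split => //; rewrite scaler0 add0r.
suff : t * (s0 + b) <= e by lra.
rewrite /t mulrC mulrA ler_pdivrMr //; have := s0b; nra.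
Qed.

Lemma qf_S w s : S w s -> qf w <= s + b.
Proof.
move=> Sw; apply: le_trans (qf_le (z := 1 * (s + b) + N 0) _) _.
  by exists 1, w, s, 0; split => //; rewrite scale1r addr0.
by rewrite mul1r (subl0 sN) addr0.
Qed.

Lemma subl_qf : subl qf.
Proof.
split.
- move=> x y; apply/ler_addgt0Pr => e e0.
  have e2 : 0 < e / 2 by rewrite divr_gt0.
  have [z1 [t [w1 [s [w2 [t0 S1 ex ->]]]]] h1] := infH_lt (@Eq_lb x) (Eq_ne x) e2.
  have [z2 [t' [w1' [s' [w2' [t0' S1' ey ->]]]]] h2] := infH_lt (@Eq_lb y) (Eq_ne y) e2.
  pose T := t + t'.
  have T0 : 0 < T by rewrite addr_gt0.
  pose u := t / T.
  have u01 : 0 <= u <= 1.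
    apply/andP; split; first by rewrite divr_ge0 // ltW.
    by rewrite ler_pdivrMr // mul1r /T lerDl ltW.
  have u1 : 1 - u = t' / T.
    apply: (mulIf (lt0r_neq0 T0)); rewrite mulrBl mul1r !divfK ?lt0r_neq0 // /T; lra.
  have SW := Sconv u01 S1 S1'.
  have key : qf (x + y) <= T * (u * s + (1 - u) * s' + b) + N (w2 + w2').
    apply: qf_le; exists T, (u *: w1 + (1 - u) *: w1'), (u * s + (1 - u) * s'), (w2 + w2').
    split => //.
    rewrite ex ey u1 scalerDr !scalerA /u !mulrA !(mulrC T) -!mulrA !divff ?lt0r_neq0 // !mulr1.
    by rewrite addrACA.
  have hT : T * (u * s + (1 - u) * s' + b) = t * (s + b) + t' * (s' + b).
    rewrite u1 /u /T; field; exact: lt0r_neq0.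
  have := sN.1 w2 w2'.
  have -> : e = e / 2 + e / 2 by rewrite -splitr.
  lra.
- move=> c x c0.
  have ci : 0 < c^-1 by rewrite invr_gt0.
  rewrite -(ler_pM2l ci) mulrA mulVf ?gt_eqF // mul1r.
  apply: infH_ge (Eq_ne x) _ => _ [t [w1 [s [w2 [t0 S1 -> ->]]]]].
  rewrite ler_pdivrMl //.
  have : qf (c *: (t *: w1 + w2)) <= (c * t) * (s + b) + N (c *: w2).
    apply: qf_le; exists (c * t), w1, s, (c *: w2); split => //.
    - by rewrite mulr_gt0.
    - by rewrite scalerDr scalerA.
  have := sN.2 _ w2 c0.
  rewrite mulrDr -mulrA; nra.
Qed.

Theorem core : exists l : V -> R,
  [/\ (forall a x y, l (a *: x + y) = a * l x + l y),
      (forall w, l w <= N w) & (forall w s, S w s -> l w <= s + b)].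
Proof.
have [l [ll lq]] := hahn_banach subl_qf.
exists l; split => // [w|w s Sw].
- exact: le_trans (lq w) (qf_N w).
- exact: le_trans (lq w) (qf_S Sw).
Qed.
End Core.

Section LinH.
Variables (R : realType) (V : lmodType R) (l : V -> R).
Hypothesis ll : forall a x y, l (a *: x + y) = a * l x + l y.
Lemma l_0 : l 0 = 0.
Proof. have := ll 1 0 0; rewrite scale1r addr0 mul1r; lra. Qed.
Lemma l_D x y : l (x + y) = l x + l y.
Proof. by have := ll 1 x y; rewrite scale1r mul1r. Qed.
Lemma l_Z a x : l (a *: x) = a * l x.
Proof. by rewrite -[a *: x]addr0 ll l_0 addr0. Qed.
Lemma l_N x : l (- x) = - l x.
Proof. by rewrite -scaleN1r l_Z mulN1r. Qed.
Lemma l_B x y : l (x - y) = l x - l y.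
Proof. by rewrite l_D l_N. Qed.
Lemma l_abs (N : V -> R) : (forall x, N (- x) = N x) -> (forall x, l x <= N x) ->
  forall x, `|l x| <= N x.
Proof.
move=> NN lN x; rewrite ler_norml; apply/andP; split; last exact: lN.
by rewrite lerNl -l_N -NN lN.
Qed.
End LinH.

Section DualH.
Variables (R : realType) (X : normedModType R).

Lemma dual_ext (f g : dual X) : (forall x, f x = g x) -> f = g.
Proof.
case: f g => f fl fc [g gl gc] /= H.
have E : f = g by apply: funext.
subst g; congr Dual; exact: Prop_irrelevance.
Qed.

Lemma lin0 (F : X -> R) : is_lin F -> F 0 = 0.
Proof. move=> l; have := l 1 0 0; rewrite scale1r addr0 mul1r; lra. Qed.
Lemma linD (F : X -> R) x y : is_lin F -> F (x + y) = F x + F y.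
Proof. by move=> l; rewrite -[x]scale1r l mul1r scale1r. Qed.
Lemma linZ (F : X -> R) a x : is_lin F -> F (a *: x) = a * F x.
Proof. by move=> l; rewrite -[a *: x]addr0 l lin0 // addr0. Qed.
Lemma linN (F : X -> R) x : is_lin F -> F (- x) = - F x.
Proof. by move=> l; rewrite -scaleN1r linZ // mulN1r. Qed.
Lemma linB (F : X -> R) x y : is_lin F -> F (x - y) = F x - F y.
Proof. by move=> l; rewrite linD // linN. Qed.

Lemma cont_of_bound (F : X -> R) C : is_lin F -> (forall x, `|F x| <= C * `|x|) -> continuous F.
Proof.
move=> l HC x; apply/cvgrPdist_lt => e e0; apply/nbhs_normP.
have C1 : 0 < `|C| + 1 by rewrite ltr_wpDl.
exists (e / (`|C| + 1)); first by rewrite /= divr_gt0.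
move=> y /=; rewrite -linB //.
move=> hy; apply: le_lt_trans (HC _) _.
apply: le_lt_trans (ler_wpM2r (normr_ge0 _) (ler_norm C)) _.
apply: le_lt_trans (ler_wpM2r (normr_ge0 _) (ler_wpDr ler01 (lexx `|C|))) _.
by rewrite mulrC -ltr_pdivlMr.
Qed.

Lemma bound_of_cont (F : X -> R) : is_lin F -> continuous F ->
  exists2 C, 0 <= C & forall x, `|F x| <= C * `|x|.
Proof.
move=> l c; have := c 0; move/cvgrPdist_lt/(_ 1 ltr01)/nbhs_normP => [d /= d0 Hd].
exists (2 / d); first by rewrite divr_ge0 // ltW.
move=> x; have [->|x0] := eqVneq x 0; first by rewrite lin0 // !normr0 mulr0.
have nx : 0 < `|x| by rewrite normr_gt0.
pose y := (d / (2 * `|x|)) *: x.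
have hy : `|0 - y| < d.
  rewrite sub0r normrN normrZ ger0_norm ?divr_ge0 ?mulr_ge0 ?ltW //.
  have -> : d / (2 * `|x|) * `|x| = d / 2 by field; rewrite gt_eqF.
  lra.
have := Hd _ hy; rewrite lin0 // sub0r normrN /y linZ // normrM.
rewrite ger0_norm; last by rewrite divr_ge0 ?mulr_ge0 // ltW.
move=> H.
have K : d / (2 * `|x|) * (2 / d * `|x|) = 1 by field; rewrite !gt_eqF.
have p : 0 < d / (2 * `|x|) by rewrite divr_gt0 ?mulr_gt0.
by apply: ltW; rewrite -(ltr_pM2l p) K.
Qed.
End DualH.

Section DualLmod.
Variables (R : realType) (X : normedModType R).

Lemma dzeroL : is_lin (fun _ : X => (0 : R)).
Proof. by move=> a x y; rewrite mulr0 addr0. Qed.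
Definition dzero : dual X := Dual dzeroL (@cst_continuous _ _ _).

Lemma lin_bound_cont (F : X -> R) (f g : dual X) : is_lin F ->
  (forall C1 C2, 0 <= C1 -> 0 <= C2 -> (forall x, `|f x| <= C1 * `|x|) ->
     (forall x, `|g x| <= C2 * `|x|) -> exists C, forall x, `|F x| <= C * `|x|) ->
  continuous F.
Proof.
move=> l H.
have [C1 C10 H1] := bound_of_cont (dual_lin f) (@dual_cont _ _ f).
have [C2 C20 H2] := bound_of_cont (dual_lin g) (@dual_cont _ _ g).
have [C HC] := H C1 C2 C10 C20 H1 H2; exact: cont_of_bound l HC.
Qed.

Lemma daddL (f g : dual X) : is_lin (fun x => f x + g x).
Proof. by move=> a x y; rewrite (dual_lin f) (dual_lin g); ring. Qed.
Lemma daddC' (f g : dual X) : continuous (fun x => f x + g x).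
Proof.
apply: (@lin_bound_cont _ f g (@daddL f g)).
move=> C1 C2 _ _ H1 H2; exists (C1 + C2) => x.
by apply: le_trans (ler_normD _ _) _; rewrite mulrDl lerD.
Qed.
Definition dadd (f g : dual X) : dual X := Dual (@daddL f g) (@daddC' f g).

Lemma dscaleL a (f : dual X) : is_lin (fun x => a * f x).
Proof. by move=> b x y; rewrite (dual_lin f); ring. Qed.
Lemma dscaleC a (f : dual X) : continuous (fun x => a * f x).
Proof.
apply: (@lin_bound_cont _ f f (@dscaleL a f)).
move=> C1 C2 _ _ H1 H2; exists (`|a| * C1) => x.
by rewrite normrM -mulrA ler_wpM2l.
Qed.
Definition dscale a (f : dual X) : dual X := Dual (@dscaleL a f) (@dscaleC a f).

Definition dopp (f : dual X) : dual X := dscale (-1) f.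
Lemma daddE f g x : dadd f g x = f x + g x. Proof. reflexivity. Qed.
Lemma dscaleE a f x : dscale a f x = a * f x. Proof. reflexivity. Qed.
Lemma dzeroE x : dzero x = 0. Proof. reflexivity. Qed.

Lemma daddA : associative dadd.
Proof. by move=> f g k; apply: dual_ext => x; rewrite /dopp ?daddE ?dscaleE ?daddE ?dscaleE ?dzeroE; rewrite addrA. Qed.
Lemma daddC : commutative dadd.
Proof. by move=> f g; apply: dual_ext => x; rewrite /dopp ?daddE ?dscaleE ?daddE ?dscaleE ?dzeroE; rewrite addrC. Qed.
Lemma dadd0 : left_id dzero dadd.
Proof. by move=> f; apply: dual_ext => x; rewrite /dopp ?daddE ?dscaleE ?daddE ?dscaleE ?dzeroE; rewrite add0r. Qed.
Lemma daddN : left_inverse dzero dopp dadd.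
Proof. by move=> f; apply: dual_ext => x; rewrite /dopp ?daddE ?dscaleE ?daddE ?dscaleE ?dzeroE; rewrite mulN1r addNr. Qed.

HB.instance Definition _ := gen_eqMixin (dual X).
HB.instance Definition _ := gen_choiceMixin (dual X).
HB.instance Definition _ := GRing.isZmodule.Build (dual X) daddA daddC dadd0 daddN.

Lemma dscaleA a b (f : dual X) : dscale a (dscale b f) = dscale (a * b) f.
Proof. by apply: dual_ext => x; rewrite /dopp ?daddE ?dscaleE ?daddE ?dscaleE ?dzeroE; rewrite mulrA. Qed.
Lemma dscale1 : left_id 1 dscale.
Proof. by move=> f; apply: dual_ext => x; rewrite /dopp ?daddE ?dscaleE ?daddE ?dscaleE ?dzeroE; rewrite mul1r. Qed.
Lemma dscaleDr : right_distributive dscale +%R.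
Proof. by move=> a f g; apply: dual_ext => x; rewrite /dopp ?daddE ?dscaleE ?daddE ?dscaleE ?dzeroE; rewrite mulrDr. Qed.
Lemma dscaleDl (f : dual X) : {morph dscale^~ f : a b / a + b}.
Proof. by move=> a b; apply: dual_ext => x; rewrite /dopp ?daddE ?dscaleE ?daddE ?dscaleE ?dzeroE; rewrite mulrDl. Qed.

HB.instance Definition _ := GRing.Zmodule_isLmodule.Build R (dual X) dscaleA dscale1 dscaleDr dscaleDl.

Lemma dualD (f g : dual X) x : (f + g) x = f x + g x. Proof. by []. Qed.
Lemma dualZ a (f : dual X) x : (a *: f) x = a * f x. Proof. by []. Qed.
Lemma dualN (f : dual X) x : (- f) x = - f x. Proof. by rewrite /= mulN1r. Qed.
Lemma dual0 x : (0 : dual X) x = 0. Proof. by []. Qed.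
Lemma dualB (f g : dual X) x : (f - g) x = f x - g x. Proof. by rewrite dualD dualN. Qed.
End DualLmod.

Section DualNorm.
Variables (R : realType) (X : normedModType R).
Implicit Types f g : dual X.

Lemma dn_has_sup f : has_sup [set `|f x| | x in [set x : X | `|x| <= 1]].
Proof.
have [C C0 HC] := bound_of_cont (dual_lin f) (@dual_cont _ _ f).
split; first by exists `|f 0|; exists 0 => //=; rewrite normr0.
exists C => _ [x /= x1 <-]; apply: le_trans (HC x) _.
by rewrite -[leRHS]mulr1 ler_wpM2l.
Qed.

Lemma dn_ub f x : `|x| <= 1 -> `|f x| <= dual_norm f.
Proof. by move=> x1; apply: sup_upper_bound (dn_has_sup f) _ _; exists x. Qed.

Lemma dn_ge0 f : 0 <= dual_norm f.
Proof.
apply: le_trans (dn_ub f (x := 0) _); first exact: normr_ge0.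
by rewrite normr0.
Qed.

Lemma dn_le f x : `|f x| <= dual_norm f * `|x|.
Proof.
have [->|x0] := eqVneq x 0; first by rewrite lin0 ?normr0 ?mulr0 //; exact: dual_lin.
have nx : 0 < `|x| by rewrite normr_gt0.
have := dn_ub f (x := `|x|^-1 *: x).
rewrite normrZ ger0_norm; last by rewrite invr_ge0 ltW.
rewrite mulVf ?gt_eqF // lexx => /(_ isT).
rewrite linZ; last exact: dual_lin.
rewrite normrM ger0_norm; last by rewrite invr_ge0 ltW.
move=> H.
by rewrite -ler_pdivrMr // mulrC.
Qed.

Lemma dn_leC g C : (forall x, `|x| <= 1 -> `|g x| <= C) -> dual_norm g <= C.
Proof.
move=> H; apply: ge_sup; first by exists `|g 0|; exists 0 => //=; rewrite normr0.
by move=> _ [x /= x1 <-]; exact: H.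
Qed.

Lemma dnD f g : dual_norm (f + g) <= dual_norm f + dual_norm g.
Proof.
apply: dn_leC => x x1; rewrite dualD; apply: le_trans (ler_normD _ _) _.
apply: lerD.
- apply: le_trans (dn_le f x) _; rewrite -[leRHS]mulr1; apply: ler_wpM2l => //; exact: dn_ge0.
- apply: le_trans (dn_le g x) _; rewrite -[leRHS]mulr1; apply: ler_wpM2l => //; exact: dn_ge0.
Qed.

Lemma dnZ c f : 0 <= c -> dual_norm (c *: f) <= c * dual_norm f.
Proof.
move=> c0; apply: dn_leC => x x1; rewrite dualZ normrM ger0_norm //.
apply: ler_wpM2l => //; apply: le_trans (dn_le f x) _.
rewrite -[leRHS]mulr1; apply: ler_wpM2l => //; exact: dn_ge0.
Qed.

Lemma dnN f : dual_norm (- f) = dual_norm f.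
Proof.
have H g : dual_norm (- g) <= dual_norm g.
  apply: dn_leC => x x1; rewrite dualN normrN; apply: le_trans (dn_le g x) _.
  rewrite -[leRHS]mulr1; apply: ler_wpM2l => //; exact: dn_ge0.
by apply/eqP; rewrite eq_le H /=; have := H (- f); rewrite opprK.
Qed.
End DualNorm.

Lemma arith (R : realType) (A B d rho s : R) : 0 <= A -> 0 <= B -> 0 <= d -> 0 < rho <= 1 ->
  (forall t, 0 < t <= 1 -> - (t * t) * (A * B) <= t * s + (1 - t) * d) ->
  - (rho * A) - (d / rho) * B - d / rho <= s.
Proof.
move=> A0 B0 d0 /andP[r0 r1] H.
have u0 : 0 < B + 1 by lra.
pose t := rho / (B + 1).
have t0 : 0 < t by rewrite divr_gt0.
have t1 : t <= 1 by rewrite /t ler_pdivrMr // mul1r; lra.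
have ht := H t (ltac:(by rewrite t0 t1)).
have e1 : t * ((d / rho) * B + d / rho) = d.
  by rewrite /t; field; rewrite !gt_eqF.
have e2 : t * (rho * A) - t * t * (A * B) = t * t * A.
  by rewrite /t; field; rewrite !gt_eqF.
have t0' := ltW t0.
have e3 : 0 <= t * t * A by apply: mulr_ge0 => //; exact: mulr_ge0.
have e4 : 0 <= t * d by exact: mulr_ge0.
rewrite -(ler_pM2l t0).
have -> : t * (- (rho * A) - d / rho * B - d / rho) = - (t * (rho * A)) - t * ((d / rho) * B + d / rho).
  by ring.
rewrite e1.
rewrite mulrBl mul1r mulNr in ht; lra.
Qed.


Section Key.
Variables (R : realType) (X : normedModType R) (h : X * dual X -> \bar R).
Hypothesis hconv : convex_fun h.
Hypothesis hc : forall (x : X) (f : dual X), ((f x)%:E <= h (x, f))%E.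
Variables (x0 : X) (x0s : dual X) (r : R).
Hypothesis hr : h (x0, x0s) = r%:E.

Let V := (X * dual X)%type.
Let c0 := x0s x0.
Let L (w : V) := x0s w.1 + w.2 x0.
Definition Sk (w : V) (s : R) := (h ((x0 + w.1)%R, (x0s + w.2)%R) <= (s + c0 + L w)%:E)%E.

Lemma Sk_conv w1 s1 w2 s2 t : 0 <= t <= 1 -> Sk w1 s1 -> Sk w2 s2 ->
  Sk (t *: w1 + (1 - t) *: w2) (t * s1 + (1 - t) * s2).
Proof.
move=> t01 H1 H2; rewrite /Sk.
have := hconv (f := x0s + (t *: w1.2 + (1 - t) *: w2.2)) t01 _ H1 H2.
have -> : t *: (x0 + w1.1) + (1 - t) *: (x0 + w2.1) = x0 + (t *: w1 + (1 - t) *: w2).1.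
  rewrite /= !scalerDr addrACA -scalerDl (_ : t + (1 - t) = 1) ?scale1r //; ring.
have -> : (t *: w1 + (1 - t) *: w2).2 = t *: w1.2 + (1 - t) *: w2.2 by [].
move=> /(_ _) H; apply: le_trans (H _) _.
  by move=> y; rewrite /=; ring.
rewrite lee_fin /L /= (dual_lin x0s) (linZ _ _ (dual_lin x0s)).
rewrite le_eqVlt; apply/orP; left; apply/eqP; rewrite /c0; ring.
Qed.

Let delta := r - c0.

Lemma delta_ge0 : 0 <= delta.
Proof. have := hc x0 x0s; rewrite hr lee_fin /delta /c0; lra. Qed.

Lemma Sk0 : Sk 0 delta.
Proof.
rewrite /Sk /= !addr0 hr lee_fin /L /= (lin0 (dual_lin x0s)).
by rewrite /delta; lra.
Qed.

Lemma Sk_coup w s : Sk w s -> w.2 w.1 <= s.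
Proof.
rewrite /Sk => H; have := le_trans (hc _ _) H.
rewrite lee_fin /= /L /c0 (linD _ _ (dual_lin x0s)) (linD _ _ (dual_lin w.2)).
lra.
Qed.

Lemma Sk_lb w s t : Sk w s -> 0 < t <= 1 ->
  - (t * t) * (`|w.1| * dual_norm w.2) <= t * s + (1 - t) * delta.
Proof.
move=> H /andP[t0 t1].
have H2 := Sk_conv (t := t) (ltac:(by rewrite ltW)) H Sk0.
rewrite scaler0 addr0 in H2; have := Sk_coup H2.
rewrite /= (linZ _ _ (dual_lin w.2)) => H3.
apply: le_trans H3.
have := dn_le w.2 w.1; rewrite ler_norml => /andP[hb _].
have : 0 <= (t * t) * (w.2 w.1 + `|w.1| * dual_norm w.2).
  by apply: mulr_ge0; [rewrite mulr_ge0 // ltW | rewrite mulrC; lra].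
rewrite mulrDr mulNr mulrA; lra.
Qed.

Lemma dn0 : dual_norm (0 : dual X) = 0.
Proof.
apply/eqP; rewrite eq_le dn_ge0 andbT; apply: dn_leC => x _.
by rewrite dual0 normr0.
Qed.

Lemma key (al be b : R) : 0 <= al -> 0 <= be ->
  (forall w s, Sk w s -> - (al * `|w.1| + be * dual_norm w.2) - b <= s) ->
  exists f : dual X, exists phi : bidual X,
   [/\ (fconj h (f, phi) < +oo)%E, (forall y, `|f y - x0s y| <= al * `|y|)
     & (forall g, `|phi g - g x0| <= be * dual_norm g)].
Proof.
move=> al0 be0 Hlb.
pose N (w : V) := al * `|w.1| + be * dual_norm w.2.
have sN : subl N.
  split.
  - move=> [u1 v1] [u2 v2]; rewrite /N /=.
    have := ler_normD u1 u2; have := dnD v1 v2.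
    move=> h1 h2; have := ler_wpM2l al0 h2; have := ler_wpM2l be0 h1; lra.
  - move=> c [u v] cp; rewrite /N /= normrZ gtr0_norm //.
    have := dnZ v (ltW cp); have := ler_wpM2l be0 (dnZ v (ltW cp)).
    move=> h1 _.
    have e1 : al * (c * `|u|) = c * (al * `|u|) by ring.
    have e2 : be * (c * dual_norm v) = c * (be * dual_norm v) by ring.
    rewrite mulrDr; lra.
have NN w : N (- w) = N w by case: w => u v; rewrite /N /= normrN dnN.
have [l [ll lN lS]] := core sN NN Sk_conv Sk0 Hlb.
have la := l_abs ll NN lN.
have P1 a y z : ((a *: y + z, 0) : V) = a *: (y, 0) + (z, 0).
  by apply/pair_eqP => /=; rewrite scaler0 addr0 !eqxx.
have P2 a g k : ((0, a *: g + k) : V) = a *: (0, g) + (0, k).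
  by apply/pair_eqP => /=; rewrite scaler0 addr0 !eqxx.
have fL : is_lin (fun y => x0s y + l (y, 0)).
  by move=> a y z; rewrite (dual_lin x0s) P1 ll; ring.
have fC : continuous (fun y => x0s y + l (y, 0)).
  have [C0 C00 HC0] := bound_of_cont (dual_lin x0s) (@dual_cont _ _ x0s).
  apply: (cont_of_bound (C := C0 + al)) => // y.
  apply: le_trans (ler_normD _ _) _; rewrite mulrDl; apply: lerD => //.
  by apply: le_trans (la _) _; rewrite /N /= dn0 mulr0 addr0.
pose f := Dual fL fC.
pose phif := fun g : dual X => g x0 + l (0, g).
have phiL : forall (a : R) (g1 g2 g3 : dual X),
    (forall x, g3 x = a * g1 x + g2 x) ->
    phif g3 = a * phif g1 + phif g2.
  move=> a g1 g2 g3 H /=.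
  have -> : g3 = a *: g1 + g2 by apply: dual_ext => x; rewrite H.
  rewrite /phif P2 ll /=; ring.
have phiB : exists C : R, forall g : dual X, `|phif g| <= C * dual_norm g.
  exists (`|x0| + be) => g /=.
  apply: le_trans (ler_normD _ _) _; rewrite mulrDl; apply: lerD.
  - by rewrite mulrC; exact: dn_le.
  - by apply: le_trans (la _) _; rewrite /N /= normr0 mulr0 add0r.
pose phi := Bidual phiL phiB.
exists f, phi; split.
- apply: (le_lt_trans (y := (c0 + b + l (x0, x0s))%:E)); last exact: ltry.
  apply: ge_ereal_sup => _ [y [g ->]] /=.
  have hy := hc y g.
  case E: (h (y, g)) hy => [rr| |] hy; last first.
  + by move: hy; rewrite leeNy_eq.
  + by rewrite /= addeNy leNye.
  rewrite -EFinB lee_fin.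
  pose w : V := (y - x0, g - x0s).
  have Sw : Sk w (rr - x0s y - g x0 + c0).
    rewrite /Sk /w /= !(addrC x0) !(addrC x0s) !subrK E lee_fin /L /= /c0.
    rewrite (linB _ _ (dual_lin x0s)) mulN1r; lra.
  have := lS _ _ Sw.
  have -> : w = (y, 0) + (0, g) - (x0, x0s) by apply/pair_eqP; rewrite /= addr0 add0r !eqxx.
  rewrite l_B // l_D // /phif; lra.
- by move=> y; rewrite /= addrC addKr; apply: le_trans (la _) _; rewrite /N /= dn0 mulr0 addr0.
- by move=> g; rewrite /= addrC addKr; apply: le_trans (la _) _; rewrite /N /= normr0 mulr0 add0r.
Qed.

Lemma lb1 rho : 0 < rho <= 1 -> forall w s, Sk w s ->
  - (rho * `|w.1| + (delta / rho) * dual_norm w.2) - delta / rho <= s.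
Proof.
move=> r01 w s S; rewrite opprD.
apply: arith; [exact: normr_ge0 | exact: dn_ge0 | exact: delta_ge0 | exact: r01 |].
by move=> t t01; exact: Sk_lb.
Qed.

Lemma lb2 rho : 0 < rho <= 1 -> forall w s, Sk w s ->
  - ((delta / rho) * `|w.1| + rho * dual_norm w.2) - delta / rho <= s.
Proof.
move=> r01 w s S; rewrite opprD [- (delta / rho * _) - _]addrC.
apply: arith; [exact: dn_ge0 | exact: normr_ge0 | exact: delta_ge0 | exact: r01 |].
by move=> t t01; rewrite (mulrC (dual_norm _)); exact: Sk_lb.
Qed.
End Key.

Lemma sum_ge (R : realType) n (F : 'I_n -> R) i : (forall j, 0 <= F j) -> F i <= \sum_(j < n) F j.
Proof. by move=> H; rewrite (bigD1 i) //= lerDl sumr_ge0. Qed.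

Lemma rho_lem (R : realType) (e M : R) : 0 < e -> 0 <= M ->
  0 < e / (e + M + 1) <= 1 /\ e / (e + M + 1) * M < e.
Proof.
move=> e0 M0; have p : 0 < e + M + 1 by lra.
split; first by apply/andP; split; [rewrite divr_gt0 | rewrite ler_pdivrMr // mul1r; lra].
rewrite mulrAC ltr_pdivrMr //; nra.
Qed.


End Aux.
Import Aux.

Theorem lemma3p3 (R : realType) (X : completeNormedModType R)
    (h : X * dual X -> \bar R) :
  convex_fun h ->
  (forall (x : X) (f : dual X), ((f x)%:E <= h (x, f))%E) ->
  (snd @` dom h `<=` wstar_cl (fst @` dom (fconj h))) /\
  (forall x : X, (fst @` dom h) x ->
     in_wstar_cl_bid (snd @` dom (fconj h)) (fun f : dual X => f x)).
Proof.
move=> hconv hc.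
have fin p : dom h p -> exists r, h p = r%:E.
  case: p => x f; rewrite /dom /=; have := hc x f.
  by case: (h (x, f)) => // r _ _; exists r.
split.
- move=> _ [[x0 x0s] Dp <-] n xs e e0 /=.
  have [r hr] := fin _ Dp.
  pose M := \sum_(i < n) `|xs i|.
  have M0 : 0 <= M by apply: sumr_ge0.
  have [r01 rM] := rho_lem e0 M0.
  have [f [phi [Hd Hf _]]] := key hconv hc hr (ltW (andP r01).1) (divr_ge0 (delta_ge0 hc hr) (ltW (andP r01).1)) (lb1 hconv hc hr r01).
  exists f; first by exists (f, phi).
  move=> i; apply: le_lt_trans (Hf _) _; apply: le_lt_trans rM.
  by apply: ler_wpM2l; [exact: ltW (andP r01).1 | exact: sum_ge].
- move=> x0 [[x1 x0s] Dp /= <-] n fs e e0.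
  have [r hr] := fin _ Dp.
  pose M := \sum_(i < n) dual_norm (fs i).
  have M0 : 0 <= M by apply: sumr_ge0 => i _; exact: dn_ge0.
  have [r01 rM] := rho_lem e0 M0.
  have [f [phi [Hd _ Hp]]] := key hconv hc hr (divr_ge0 (delta_ge0 hc hr) (ltW (andP r01).1)) (ltW (andP r01).1) (lb2 hconv hc hr r01).
  exists phi; first by exists (f, phi).
  move=> i; apply: le_lt_trans (Hp _) _; apply: le_lt_trans rM.
  apply: ler_wpM2l; [exact: ltW (andP r01).1 | apply: sum_ge => j; exact: dn_ge0].
Qed.
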